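(* Let $n\ge 1$, $k\ge 1$, and let $s_1,\dots,s_k$ be nonnegative integers. There are $k$ players who independently each open one cereal box per time step; each box contains one of $n$ coupon types chosen uniformly at random, independently of everything else. Player $i$ is currently missing $s_i$ of the $n$ coupon types. Let $X_i(s_i)$ be the number of boxes player $i$ must open until they have all $n$ types, and let $$M(s_1,\dots,s_k):=\mathbb{E}\left[\max\{X_1(s_1),\dots,X_k(s_k)\}\right]$$ be the expected number of boxes required for the slowest player to complete the collection. Then, with $S:=\sum_{i=1}^k s_i$, $$M(s_1,\dots,s_k)=nH(S)-\frac{\left(H(S)-1\right)\sum_{i<j}s_is_j}{S(S-1)}+o(1).$$
   Context: $H(m)=\sum_{j=1}^m\frac1j$ denotes the $m$-th harmonic number. The term $o(1)$ denotes a quantity tending to $0$ as $n\to\infty$ with $k$ and $s_1,\dots,s_k$ fixed. *)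

(* Defs.v *)
From HB Require Import structures.
From mathcomp Require Import all_boot all_order all_algebra.
From mathcomp Require Import all_classical all_reals all_analysis.
Set Implicit Arguments. Unset Strict Implicit. Unset Printing Implicit Defensive.
Import Order.TTheory GRing.Theory Num.Theory.
Local Open Scope ring_scope.

Definition harmonicH (R : realType) (m : nat) : R :=
  \sum_(1 <= j < m.+1) (j%:R)^-1.

(* Outcome of the first t boxes of all k players: F i u = coupon type found by
   player i in box number u (u < t).  Player i is missing the s i types
   {0, ..., s i - 1}.  The event "every player is complete after t boxes",
   i.e. max_i X_i(s_i) <= t. *)
Definition all_complete (n k : nat) (s : 'I_k -> nat) (t : nat)
    (F : {ffun 'I_k -> {ffun 'I_t -> 'I_n}}) : bool :=
  [forall i : 'I_k, forall j : 'I_n,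
     (nat_of_ord j < s i)%N ==> [exists u : 'I_t, F i u == j]].

Definition prob_max_le (R : realType) (n k : nat) (s : 'I_k -> nat) (t : nat) : R :=
  #|[set F : {ffun 'I_k -> {ffun 'I_t -> 'I_n}} | all_complete s F]|%:R / #|{: {ffun 'I_k -> {ffun 'I_t -> 'I_n}}}|%:R.

(* M(s_1,...,s_k) = E[max_i X_i(s_i)] = sum_{t >= 0} P(max > t)
   (tail-sum formula for a nonnegative integer-valued random variable). *)
Definition expected_max (R : realType) (n k : nat) (s : 'I_k -> nat) : R :=
  limn (fun N : nat => \sum_(0 <= t < N) (1 - prob_max_le R n s t)).

Arguments harmonicH R m : clear implicits.
Arguments prob_max_le R n {k} s t.
Arguments expected_max R n {k} s.

(* Main.v *)
Require Import Defs.
From HB Require Import structures.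
From mathcomp Require Import all_boot all_order all_algebra.
From mathcomp Require Import all_classical all_reals all_analysis.
From mathcomp Require Import ring lra.
Import Order.TTheory GRing.Theory Num.Theory.
Import numFieldNormedType.Exports.
Local Open Scope classical_set_scope.
Local Open Scope ring_scope.
Section Num.
Variable R : realType.

Lemma pascal_sum N (f : nat -> R) :
  \sum_(m < N.+2) ('C(N.+1, m))%:R * f m =
  \sum_(m < N.+1) ('C(N, m))%:R * (f m + f m.+1).
Proof.
rewrite big_ord_recl bin0 /=.
under eq_bigr do rewrite /bump /= binS natrD mulrDl.
rewrite big_split /= addrA.
under [X in _ = X]eq_bigr do rewrite mulrDr.
rewrite big_split /=; congr (_ + _).
rewrite big_ord_recr /= bin_small // mul0r addr0.
by rewrite [in RHS]big_ord_recl bin0.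
Qed.

Definition Qp (N : nat) (x : R) := \prod_(j < N.+1) (x + j%:R).

Lemma Qp_gt0 N x : 0 < x -> 0 < Qp N x.
Proof.
move=> x0; rewrite /Qp; apply: prodr_gt0 => j _.
by apply: (lt_le_trans x0); rewrite lerDl.
Qed.

Lemma QpS N x : Qp N.+1 x = Qp N x * (x + N.+1%:R).
Proof. by rewrite /Qp big_ord_recr. Qed.

Lemma Qp_shift N x : x * Qp N (x + 1) = Qp N.+1 x.
Proof.
rewrite /Qp [in RHS]big_ord_recl /= addr0; congr (_ * _).
by apply: eq_bigr => j _; rewrite /bump /= -addrA natrD [1 + _]addrC.
Qed.

Lemma Fsum N x : 0 < x ->
  \sum_(m < N.+1) ('C(N, m))%:R * ((-1) ^+ m / (m%:R + x)) = (N`!)%:R / Qp N x.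
Proof.
elim: N x => [|N IH] x x0.
  by rewrite big_ord1 /Qp big_ord1 /= bin0 mul1r expr0 add0r addr0.
rewrite (pascal_sum N (fun m => (-1) ^+ m / (m%:R + x))).
have -> : \sum_(m < N.+1) ('C(N, m))%:R *
    ((-1) ^+ m / (m%:R + x) + (-1) ^+ m.+1 / (m.+1%:R + x)) =
  \sum_(m < N.+1) ('C(N, m))%:R * ((-1) ^+ m / (m%:R + x)) -
  \sum_(m < N.+1) ('C(N, m))%:R * ((-1) ^+ m / (m%:R + (x + 1))).
  rewrite -sumrB; apply: eq_bigr => m _.
  by rewrite [(-1) ^+ m.+1]exprS -natr1 mulN1r mulNr -[_ + 1 + x]addrA [1 + x]addrC; ring.
have x1 : 0 < x + 1 by rewrite addr_gt0.
rewrite IH // IH //.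
have hQ := @Qp_gt0 N x x0; have hQ1 := @Qp_gt0 N (x+1) x1.
have e : Qp N (x + 1) = Qp N x * (x + N.+1%:R) / x.
  by rewrite -QpS -Qp_shift [x * _]mulrC mulfK // gt_eqF.
rewrite e QpS factS natrM.
have xN : 0 < x + N.+1%:R by rewrite addr_gt0.
rewrite -natr1; field.
by rewrite -natr1 in xN; rewrite !gt_eqF.
Qed.

Lemma Gsum N x : 0 < x ->
  \sum_(m < N.+1) ('C(N, m))%:R * ((-1) ^+ m / (m%:R + x) ^+ 2) =
  (N`!)%:R / Qp N x * \sum_(j < N.+1) (x + j%:R)^-1.
Proof.
elim: N x => [|N IH] x x0.
  rewrite !big_ord1 /Qp big_ord1 /= bin0 fact0 expr0 add0r addr0; field; by rewrite gt_eqF.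
rewrite (pascal_sum N (fun m => (-1) ^+ m / (m%:R + x) ^+ 2)).
have -> : \sum_(m < N.+1) ('C(N, m))%:R *
    ((-1) ^+ m / (m%:R + x) ^+ 2 + (-1) ^+ m.+1 / (m.+1%:R + x) ^+ 2) =
  \sum_(m < N.+1) ('C(N, m))%:R * ((-1) ^+ m / (m%:R + x) ^+ 2) -
  \sum_(m < N.+1) ('C(N, m))%:R * ((-1) ^+ m / (m%:R + (x + 1)) ^+ 2).
  rewrite -sumrB; apply: eq_bigr => m _.
  by rewrite [(-1) ^+ m.+1]exprS -natr1 mulN1r mulNr -[_ + 1 + x]addrA [1 + x]addrC; ring.
have x1 : 0 < x + 1 by rewrite addr_gt0.
rewrite IH // IH //.
have hQ := @Qp_gt0 N x x0; have hQ1 := @Qp_gt0 N (x+1) x1.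
have e : Qp N (x + 1) = Qp N x * (x + N.+1%:R) / x.
  by rewrite -QpS -Qp_shift [x * _]mulrC mulfK // gt_eqF.
have eS : \sum_(j < N.+1) (x + 1 + j%:R)^-1 =
   \sum_(j < N.+1) (x + j%:R)^-1 + (x + N.+1%:R)^-1 - x^-1.
  rewrite big_ord_recr /= [in RHS]big_ord_recl /= addr0.
  rewrite (_ : forall a b c : R, a + b + c - a = b + c); last by move=> *; ring.
  congr (_ + _); last by rewrite -natr1 addrAC addrA.
  by apply: eq_bigr => j _; rewrite /bump /= -addrA natrD [1 + _]addrC.
rewrite e eS QpS factS natrM [in RHS]big_ord_recr /=.
have xN : 0 < x + N.+1%:R by rewrite addr_gt0.
rewrite -natr1; rewrite -natr1 in xN; field.
by rewrite !gt_eqF.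
Qed.

Lemma Qp1 N : Qp N 1 = (N.+1`!)%:R.
Proof.
elim: N => [|N IH]; first by rewrite /Qp big_ord1 /= addr0.
by rewrite QpS IH (factS N.+1) natrM mulrC nat1r.
Qed.

Lemma Qp2 N : Qp N 2 = (N.+2`!)%:R.
Proof.
elim: N => [|N IH]; first by rewrite /Qp big_ord1 /= addr0.
by rewrite QpS IH (factS N.+2) natrM mulrC -natrD.
Qed.

Lemma harmonic_alt S :
  harmonicH R S = - \sum_(m < S.+1) ('C(S, m))%:R * ((-1) ^+ m / m%:R).
Proof.
elim: S => [|S IH].
  by rewrite /harmonicH big_geq // big_ord1 invr0 mulr0 mulr0 oppr0.
rewrite /harmonicH big_nat_recr //= -/(harmonicH R S) IH (pascal_sum S (fun m => (-1) ^+ m / m%:R)).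
under [X in _ = - X]eq_bigr do rewrite mulrDr.
rewrite big_split /= opprD; congr (_ + _).
have H := @Fsum S 1 ltr01; rewrite Qp1 (factS S) natrM in H.
rewrite -sumrN.
rewrite (eq_bigr (fun m : 'I_S.+1 => ('C(S, m))%:R * ((-1) ^+ m / (m%:R + 1)))).
  rewrite H; field; by rewrite nat1r !pnatr_eq0 -lt0n fact_gt0.
by move=> m _; rewrite exprS mulN1r mulNr mulrN opprK natr1.
Qed.

Lemma Tsum N :
  \sum_(m < N.+1) ('C(N, m))%:R * ((-1) ^+ m / (m%:R + 2) ^+ 2) =
  (harmonicH R N.+2 - 1) / (N.+2%:R * (N.+2%:R - 1)).
Proof.
rewrite Gsum // Qp2 (factS N.+1) factS !natrM.
have -> : \sum_(j < N.+1) (2 + j%:R)^-1 = harmonicH R N.+2 - 1.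
  rewrite /harmonicH big_add1 /= big_mkord big_ord_recl /=.
  have -> : ((0.+1)%:R : R)^-1 = 1 by rewrite invr1.
  rewrite [1 + _]addrC addrK.
  apply: eq_bigr => j _; rewrite /bump add1n; congr GRing.inv; rewrite -!natr1; ring.
rewrite -[N.+2]addn2 -[N.+1]addn1 !natrD.
field.
rewrite -natr1 -addrA -(natrD _ 1 1) -addrA.
have h : (0:R) < N%:R + 1 by rewrite ltr_wpDl.
have h2 : (0:R) < N%:R + (1 + 1) by rewrite ltr_wpDl.
by rewrite !gt_eqF // pnatr_eq0 -lt0n fact_gt0.
Qed.

End Num.
Section Sets.
Variable R : realType.

Lemma sum_card_sub (T : finType) (V : {set T}) (g : nat -> R) :
  \sum_(A : {set T} | A \subset V) g #|A| =
  \sum_(m < #|V|.+1) ('C(#|V|, m))%:R * g m.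
Proof.
rewrite (partition_big (fun A : {set T} => (inord #|A| : 'I_#|V|.+1)) xpredT) //=.
apply: eq_bigr => m _.
have key : forall A : {set T}, A \subset V ->
    (inord #|A| == m :> 'I_#|V|.+1) = (#|A| == m).
  move=> A AV; rewrite -(inj_eq val_inj) /= inordK // ltnS.
  exact: subset_leq_card.
transitivity (\sum_(A in [set A : {set T} | A \subset V & #|A| == m]) g m).
  apply: eq_big => A; first by rewrite inE; case AV: (A \subset V) => //=; rewrite key.
  by case/andP=> AV; rewrite key // => /eqP ->.
by rewrite sumr_const cards_draws mulr_natl.
Qed.

Lemma sum_card_all (T : finType) (g : nat -> R) :
  \sum_(A : {set T}) g #|A| =
  \sum_(m < #|T|.+1) ('C(#|T|, m))%:R * g m.
Proof.
rewrite -cardsT -sum_card_sub; apply: eq_bigl => A; by rewrite finset.subsetT.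
Qed.

Lemma sum_card_pair (T : finType) (x y : T) (g : nat -> R) : x != y ->
  \sum_(A : {set T} | (x \in A) && (y \in A)) g #|A| =
  \sum_(m < (#|T| - 2).+1) ('C(#|T| - 2, m))%:R * g m.+2.
Proof.
move=> xy.
set P2 := ([set x; y])%SET.
rewrite (reindex_onto (fun B => B :|: P2) (fun A => A :\: P2)); last first.
  move=> A /andP[xA yA]; apply/setP=> z; rewrite !inE.
  case zx: (z == x); first by rewrite (eqP zx) xA orbT.
  case zy: (z == y); first by rewrite (eqP zy) yA !orbT.
  by rewrite /= ?orbF.
set Tm := (#|T| - 2)%N.
rewrite (_ : Tm = #|~: P2|); last by rewrite cardsCs finset.setCK cards2 xy.
rewrite -(@sum_card_sub _ (~: P2) (fun m => g m.+2)).
apply: eq_big => B.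
  rewrite !inE !eqxx !orbT /= finset.setDUl finset.setDv finset.setU0 -finset.disjoints_subset.
  apply/eqP/idP => [<-|/finset.setDidPl //].
  by rewrite disjoint_subset; apply/fintype.subsetP => z; rewrite !inE; case/andP.
move=> /andP[_ /eqP hB]; congr g.
rewrite cardsU cards2 xy.
have hB' : B :\: P2 = B by rewrite -{2}hB finset.setDUl finset.setDv finset.setU0.
have -> : B :&: P2 = finset.set0.
  apply/setP=> z; rewrite !inE; apply/negbTE; apply/negP=> /andP[zB zP].
  have : z \in B :\: P2 by rewrite hB'.
  by case/finset.setDP => _; rewrite !inE zP.
by rewrite cards0 subn0 addn2.
Qed.

Lemma prod_expand (T : finType) (y : T -> R) :
  \prod_(x : T) (1 - y x) =
  \sum_(A : {set T}) (-1) ^+ #|A| * \prod_(x in A) y x.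
Proof.
transitivity (\prod_(x : T) \sum_(b : bool) (if b then - y x else 1)).
  by apply: eq_bigr => x _; rewrite big_bool /= addrC.
rewrite bigA_distr_bigA /=.
rewrite (reindex (fun A : {set T} => [ffun x => x \in A])); last first.
  exists (fun f : {ffun T -> bool} => ([set x | f x])%SET) => [A _|f _].
    by apply/setP=> z; rewrite inE ffunE.
  by apply/ffunP=> z; rewrite !ffunE inE.
apply: eq_bigr => A _.
rewrite -prodrN [RHS]big_mkcond /=; apply: eq_bigr => x _.
by rewrite ffunE; case: (x \in A).
Qed.

End Sets.
Section Lim.
Variable R : realType.

Lemma cvg_near (f g : nat -> R) (l : R) :
  (\forall n \near \oo, f n = g n) -> g @ \oo --> l -> f @ \oo --> l.
Proof.
move=> H hg; apply: cvg_trans hg; apply: near_eq_cvg.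
by apply: filterS H => n ->.
Qed.

Lemma cvg_evt (f g : nat -> R) (l : R) (N0 : nat) :
  (forall n, (N0 < n)%N -> f n = g n) -> g @ \oo --> l -> f @ \oo --> l.
Proof.
move=> H; apply: cvg_near; near=> n; apply: H; near: n; exact: nbhs_infty_gt.
Unshelve. all: by end_near.
Qed.

Lemma cvg_sum_fin (I : Type) (r : seq I) (P : pred I) (f : I -> nat -> R) (l : I -> R) :
  (forall i, P i -> f i @ \oo --> l i) ->
  (fun n => \sum_(i <- r | P i) f i n) @ \oo --> \sum_(i <- r | P i) l i.
Proof.
move=> H; elim: r => [|i r IH].
  under eq_cvg do rewrite big_nil.
  by rewrite big_nil; exact: cvg_cst.
under eq_cvg do rewrite big_cons.
rewrite big_cons; case Pi: (P i) => //.
by apply: cvgD => //; exact: H.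
Qed.

Lemma inv_cvg0 : (fun n : nat => (n%:R)^-1 : R) @ \oo --> 0.
Proof. by rewrite -cvg_shiftS; exact: cvg_harmonic. Qed.

Lemma nn_cvg1 : (fun n : nat => (n%:R / n%:R : R)) @ \oo --> (1 : R).
Proof.
apply: (@cvg_evt _ (fun=> 1) 1 0); last exact: cvg_cst.
by move=> n n0; rewrite divff // pnatr_eq0 -lt0n.
Qed.

Lemma prod_asym (I : Type) (r : seq I) (b : I -> R) :
  (fun n : nat => n%:R * (1 - \prod_(i <- r) (1 - b i / n%:R))) @ \oo
     --> \sum_(i <- r) b i /\
  (fun n : nat => n%:R ^+ 2 * (\prod_(i <- r) (1 - b i / n%:R) - 1
        + (\sum_(i <- r) b i) / n%:R)) @ \oo
     --> ((\sum_(i <- r) b i) ^+ 2 - \sum_(i <- r) b i ^+ 2) / 2.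
Proof.
elim: r => [|j r [IH1 IH2]].
  rewrite !big_nil; split.
    under eq_cvg do rewrite big_nil subrr mulr0.
    exact: cvg_cst.
  under eq_cvg do rewrite big_nil subrr mul0r addr0 mulr0.
  by rewrite expr2 mulr0 subrr mul0r; exact: cvg_cst.
set P := fun n : nat => \prod_(i <- r) (1 - b i / n%:R).
set sg := \sum_(i <- r) b i.
have HP : P @ \oo --> (1 : R).
  apply: (@cvg_evt _ (fun n => 1 - n%:R^-1 * (n%:R * (1 - P n))) 1 0).
    by move=> n n0; rewrite mulrA mulVf ?pnatr_eq0 -?lt0n // mul1r opprB addrC subrK.
  have := cvgB (cvg_cst (1 : R)) (cvgM inv_cvg0 IH1).
  by rewrite mul0r subr0; apply.
split.
  have E1 : (fun n : nat => n%:R * (1 - \prod_(i <- j :: r) (1 - b i / n%:R))) =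
     (fun n => n%:R * (1 - P n) + b j * (n%:R / n%:R) * P n).
    by apply/funext => n; rewrite big_cons /P; ring.
  rewrite E1 big_cons -/sg (_ : b j + sg = sg + b j * 1 * 1); last by rewrite !mulr1 addrC.
  apply: cvgD => //; apply: cvgM => //; apply: cvgM; [exact: cvg_cst | exact: nn_cvg1].
have E2 : (fun n : nat => n%:R ^+ 2 * (\prod_(i <- j :: r) (1 - b i / n%:R) - 1
        + (\sum_(i <- j :: r) b i) / n%:R)) =
   (fun n => n%:R ^+ 2 * (P n - 1 + sg / n%:R) + b j * (n%:R / n%:R) * (n%:R * (1 - P n))).
  by apply/funext => n; rewrite !big_cons /P /sg; ring.
rewrite E2 !big_cons -/sg.
have -> : ((b j + sg) ^+ 2 - (b j ^+ 2 + \sum_(i <- r) b i ^+ 2)) / 2 =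
   (sg ^+ 2 - \sum_(i <- r) b i ^+ 2) / 2 + b j * 1 * sg.
  by field.
apply: cvgD => //; apply: cvgM => //; apply: cvgM; [exact: cvg_cst | exact: nn_cvg1].
Qed.

Lemma term_cvg (I : Type) (r : seq I) (b : I -> R) :
  \sum_(i <- r) b i != 0 ->
  (fun n : nat => (1 - \prod_(i <- r) (1 - b i / n%:R))^-1
     - n%:R / (\sum_(i <- r) b i)
     - (((\sum_(i <- r) b i) ^+ 2 - \sum_(i <- r) b i ^+ 2) / 2) / (\sum_(i <- r) b i) ^+ 2)
  @ \oo --> 0.
Proof.
move=> a0.
have [H1 H2] := @prod_asym I r b.
set a := \sum_(i <- r) b i in a0 H1 H2 *.
set e2 := (a ^+ 2 - _) / 2 in H2 *.
set q := fun n : nat => \prod_(i <- r) (1 - b i / n%:R) in H1 H2 *.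
have nD : \forall n \near \oo, n%:R * (1 - q n) != 0 := cvgr_neq0 _ H1 a0.
apply: (@cvg_near _ (fun n => n%:R ^+ 2 * (q n - 1 + a / n%:R)
        * (n%:R * (1 - q n) * a)^-1 - e2 / a ^+ 2) 0).
  near=> n.
  have n0 : n%:R != 0 :> R by rewrite pnatr_eq0 -lt0n; near: n; exact: nbhs_infty_gt.
  have D0 : n%:R * (1 - q n) != 0 by near: n; exact: nD.
  have q0 : 1 - q n != 0 by apply: contraNneq D0 => ->; rewrite mulr0.
  rewrite /q in q0 *; field; by rewrite n0 q0 a0.
have := cvgB (cvgM H2 (cvgV _ (cvgM H1 (cvg_cst a)))) (cvg_cst (e2 / a ^+ 2)).
rewrite expr2 subrr; apply.
by rewrite mulf_neq0.
Unshelve. all: by end_near.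
Qed.

End Lim.
Section Bool.
Variable R : realType.

Lemma prod_bool_cond (T : finType) (P Q : pred T) :
  \prod_(x | P x) ((Q x)%:R : R) = ([forall x, P x ==> Q x])%:R.
Proof.
case: (boolP [forall x, P x ==> Q x]) => H.
  by rewrite big1 // => x Px; rewrite (implyP (forallP H x) Px).
move/forallPn: H => [x]; rewrite negb_imply => /andP[Px nQ].
by rewrite (bigD1 x) //= (negbTE nQ) mul0r.
Qed.

Lemma prod_bool (T : finType) (Q : pred T) :
  \prod_x ((Q x)%:R : R) = ([forall x, Q x])%:R.
Proof.
rewrite prod_bool_cond; congr (_ %:R); apply: eq_forallb => x //.
Qed.

Lemma sum_bool (T : finType) (P : pred T) :
  \sum_x ((P x)%:R : R) = #|([set x | P x])%SET|%:R.
Proof.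
rewrite -sum1dep_card natr_sum [RHS]big_mkcond; apply: eq_bigr => x _.
by case: (P x).
Qed.

End Bool.

Section Count.
Variables (R : realType) (k : nat) (s : 'I_k -> nat).
Local Notation T := {i : 'I_k & 'I_(s i)}.

Definition cnt (A : {set T}) (i : 'I_k) : nat := #|([set x in A | tag x == i])%SET|.
Definition qA (n : nat) (A : {set T}) : R := \prod_(i < k) (1 - (cnt A i)%:R / n%:R).

Lemma card_T : #|{: T}| = (\sum_(i < k) s i)%N.
Proof.
rewrite card_tagged sumnE big_map big_enum /=; apply: eq_bigr => i _.
by rewrite card_ord.
Qed.

Lemma sum_cnt (A : {set T}) : (\sum_(i < k) cnt A i)%N = #|A|.
Proof.
rewrite -sum1_card (partition_big (fun x : T => tag x) xpredT) //=.
apply: eq_bigr => i _; rewrite /cnt -sum1_card; apply: eq_bigl => x.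
by rewrite !inE.
Qed.

Lemma probE n t : (\sum_(i < k) s i < n)%N ->
  prob_max_le R n s t = \sum_(A : {set T}) (-1) ^+ #|A| * qA n A ^+ t.
Proof.
case: n => [//|n'] Sn.
have sle : forall i, (s i <= n')%N.
  move=> i; rewrite -ltnS; apply: leq_ltn_trans Sn.
  by rewrite (bigD1 i) //= leq_addr.
have jle : forall i (j : 'I_(s i)), (j < n'.+1)%N.
  by move=> i j; apply: leq_trans (ltn_ord j) _; apply: leq_trans (sle i) _.
pose hit (F : {ffun 'I_k -> {ffun 'I_t -> 'I_n'.+1}}) (x : T) : bool :=
  [exists u, F (tag x) u == inord (tagged x)].
have step1 : forall F, all_complete s F = [forall x, hit F x].
  move=> F; apply/forallP/forallP => H.
    move=> [i j]; move/forallP: (H i) => /(_ (inord j)).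
    by rewrite inordK ?ltn_ord ?jle.
  move=> i; apply/forallP => j; apply/implyP => ji.
  have := H (Tagged (fun i => 'I_(s i)) (Ordinal ji)).
  by rewrite /hit /= inord_val.
have step2 : (#|([set F : {ffun 'I_k -> {ffun 'I_t -> 'I_n'.+1}} | all_complete s F])%SET|%:R : R) =
    \sum_F \prod_(x : T) ((hit F x)%:R : R).
  by rewrite -(@sum_bool R _ (fun F : {ffun 'I_k -> {ffun 'I_t -> 'I_n'.+1}} => all_complete s F)); apply: eq_bigr => F _; rewrite prod_bool step1.
have step3 : forall F, \prod_(x : T) ((hit F x)%:R : R) =
    \sum_(A : {set T}) (-1) ^+ #|A| * \prod_(x in A) ((~~ hit F x)%:R : R).
  move=> F; rewrite -prod_expand; apply: eq_bigr => x _.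
  by case: (hit F x); rewrite ?subrr ?subr0.
have step4 : forall A : {set T},
    \sum_(F : {ffun 'I_k -> {ffun 'I_t -> 'I_n'.+1}})
      \prod_(x in A) ((~~ hit F x)%:R : R) =
    \prod_(i < k) ((n'.+1)%:R - (cnt A i)%:R) ^+ t.
  move=> A.
  pose B (i : 'I_k) : {set 'I_n'.+1} :=
    ((fun x : T => (inord (tagged x) : 'I_n'.+1)) @: ([set y in A | tag y == i])%SET)%SET.
  have cardB : forall i, #|B i| = cnt A i.
    move=> i; rewrite card_in_imset //.
    move=> [ix jx] [iy jy]; rewrite !inE /= => /andP[_ /eqP ex] /andP[_ /eqP ey].
    subst ix iy => h.
    have := congr1 val h; rewrite /= !inordK ?jle //.
    by move/val_inj => ->.
  have eqb : forall F, [forall x, (x \in A) ==> ~~ hit F x] =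
      [forall i, [forall u, F i u \notin B i]].
    move=> F; apply/forallP/forallP => H.
      move=> i; apply/forallP => u; apply/imsetP => -[[ix jx]].
      rewrite inE /= => /andP[xA /eqP xi] Fu; subst ix.
      have := H (Tagged (fun i => 'I_(s i)) jx); rewrite xA /= => /negP; apply.
      by apply/existsP; exists u; rewrite /= Fu.
    move=> [ix jx]; apply/implyP => xA; apply/negP => /existsP [u /eqP Fu].
    move/forallP: (H ix) => /(_ u); rewrite /= in Fu; rewrite Fu => /negP; apply.
    by apply/imsetP; exists (Tagged (fun i => 'I_(s i)) jx); rewrite // inE xA /=.
  transitivity (\sum_(F : {ffun 'I_k -> {ffun 'I_t -> 'I_n'.+1}})
      \prod_(i < k) \prod_(u < t) (((F i u) \notin B i)%:R : R)).
    apply: eq_bigr => F _; rewrite prod_bool_cond eqb -prod_bool.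
    by apply: eq_bigr => i _; rewrite prod_bool.
  rewrite -(bigA_distr_bigA (fun (i : 'I_k) (g : {ffun 'I_t -> 'I_n'.+1}) => \prod_(u < t) (((g u) \notin B i)%:R : R))) /=.
  apply: eq_bigr => i _.
  rewrite -(bigA_distr_bigA (fun (u : 'I_t) c => (((c : 'I_n'.+1) \notin B i)%:R : R))) /=.
  rewrite prodr_const card_ord sum_bool.
  have := cardsC (B i); rewrite card_ord cardB => e.
  have -> : ([set x | x \notin B i])%SET = ~: B i by apply/setP => c; rewrite !inE.
  have e2 : ((n'.+1)%:R : R) = (cnt A i)%:R + #|~: B i|%:R by rewrite -natrD e.
  by rewrite e2 (addrC (cnt A i)%:R) addrK.
rewrite /prob_max_le; set den := (X in _ / X).
transitivity ((\sum_(F : {ffun 'I_k -> {ffun 'I_t -> 'I_n'.+1}})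
    \prod_(x : T) ((hit F x)%:R : R)) / den).
  by congr (_ / _); exact: step2.
under eq_bigr do rewrite step3.
rewrite exchange_big /=.
under eq_bigr do rewrite -mulr_sumr step4.
rewrite /den card_ffun !card_ord card_ffun !card_ord natrX natrX mulr_suml.
apply: eq_bigr => A _; rewrite -mulrA; congr (_ * _).
rewrite /qA -prodrXl.
have -> : ((n'.+1)%:R ^+ t) ^+ k = \prod_(i < k) ((n'.+1)%:R ^+ t : R).
  by rewrite prodr_const card_ord.
rewrite -prodf_div; apply: eq_bigr => i _; rewrite -expr_div_n; congr (_ ^+ _).
by rewrite mulrBl divff.
Qed.

End Count.
Arguments cnt {k s} A i.
Arguments qA {R k s} n A.
Arguments card_T {k s}.
Arguments sum_cnt {k s} A.
Arguments probE {R k s} n t.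
Section Ident.
Variables (R : realType) (k : nat) (s : 'I_k -> nat).
Local Notation T := {i : 'I_k & 'I_(s i)}.
Local Notation S := (\sum_(i < k) s i)%N.

Definition bb (A : {set T}) (i : 'I_k) : R := (cnt A i)%:R.
Definition alpha (A : {set T}) : R := \sum_(i < k) bb A i.
Definition e2 (A : {set T}) : R := (alpha A ^+ 2 - \sum_(i < k) bb A i ^+ 2) / 2.

Lemma alphaE A : alpha A = #|A|%:R.
Proof. by rewrite /alpha /bb -natr_sum sum_cnt. Qed.

Lemma I1 : harmonicH R S = - \sum_(A : {set T}) (-1) ^+ #|A| / alpha A.
Proof.
rewrite harmonic_alt; congr (- _).
under [RHS]eq_bigr do rewrite alphaE.
by rewrite (@sum_card_all R T (fun m => (-1) ^+ m / (m%:R : R))) card_T.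
Qed.

Lemma sum_tag (G : 'I_k -> R) : \sum_(x : T) G (tag x) = \sum_(i < k) (s i)%:R * G i.
Proof.
transitivity (\sum_(i < k) \sum_(j : 'I_(s i)) G i).
  by rewrite (sig_big_dep xpredT (fun i (j : 'I_(s i)) => true) (fun i (j : 'I_(s i)) => G i)) /=.
by apply: eq_bigr => i _; rewrite sumr_const card_ord mulr_natl.
Qed.

Lemma bbE A i : bb A i = \sum_(x in A) ((tag x == i)%:R : R).
Proof.
rewrite /bb /cnt big_mkcond /=.
rewrite (eq_bigr (fun x => (((x \in A) && (tag x == i))%:R : R))); last first.
  by move=> x _; case: (x \in A).
rewrite sum_bool; congr (#|_|%:R); apply/setP => x; by rewrite !inE.
Qed.

Lemma e2E A : e2 A = (\sum_(x in A) \sum_(y in A) ((tag x != tag y)%:R : R)) / 2.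
Proof.
rewrite /e2; congr (_ / _).
have h1 : alpha A ^+ 2 = \sum_(x in A) \sum_(y in A) (1 : R).
  by rewrite alphaE !sumr_const expr2 mulr_natr.
have h2 : \sum_(i < k) bb A i ^+ 2 = \sum_(x in A) \sum_(y in A) ((tag x == tag y)%:R : R).
  transitivity (\sum_(i < k) \sum_(x in A) \sum_(y in A) ((tag x == i)%:R * (tag y == i)%:R : R)).
    apply: eq_bigr => i _; rewrite expr2 bbE mulr_suml; apply: eq_bigr => x _.
    by rewrite mulr_sumr.
  rewrite exchange_big /=; apply: eq_bigr => x _.
  rewrite exchange_big /=; apply: eq_bigr => y _.
  rewrite (bigD1 (tag x)) //= eqxx mul1r big1; last first.
    by move=> i ni; rewrite eq_sym (negbTE ni) mul0r.
  by rewrite addr0 eq_sym.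
rewrite h1 h2 -sumrB; apply: eq_bigr => x _; rewrite -sumrB; apply: eq_bigr => y _.
by case: (tag x =P tag y) => _ /=; rewrite ?subrr ?subr0.
Qed.

Lemma sum_pairs :
  \sum_(x : T) \sum_(y : T) ((tag x != tag y)%:R : R) =
  2 * \sum_(i < k) \sum_(j < k | (i < j)%N) ((s i * s j)%N%:R : R).
Proof.
transitivity (\sum_(i < k) \sum_(j < k) ((s i)%:R * ((s j)%:R * ((i != j)%:R : R)))).
  rewrite (sum_tag (fun i => \sum_(y : T) ((i != tag y)%:R : R))).
  apply: eq_bigr => i _; rewrite (sum_tag (fun j => ((i != j)%:R : R))).
  by rewrite mulr_sumr.
have e : forall i j : 'I_k, ((i != j)%:R : R) = ((i < j)%N)%:R + ((j < i)%N)%:R.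
  move=> i j; rewrite -(inj_eq val_inj) neq_ltn.
  by case: ltngtP => _ /=; rewrite ?addr0 ?add0r.
pose A (i j : 'I_k) : R := (s i)%:R * ((s j)%:R * ((i < j)%N)%:R).
pose B (i j : 'I_k) : R := (s i)%:R * ((s j)%:R * ((j < i)%N)%:R).
rewrite (eq_bigr (fun i => \sum_(j < k) A i j + \sum_(j < k) B i j)); last first.
  move=> i _; rewrite -big_split; apply: eq_bigr => j _.
  by rewrite /A /B e mulrDr mulrDr.
rewrite big_split /= mulr2n mulrDl mul1r; congr (_ + _).
  apply: eq_bigr => i _; rewrite [RHS]big_mkcond; apply: eq_bigr => j _.
  by rewrite /A; case: (i < j)%N; rewrite ?mulr1 ?mulr0 ?natrM.
rewrite exchange_big /=; apply: eq_bigr => j _; rewrite [RHS]big_mkcond.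
apply: eq_bigr => i _.
by rewrite /B; case: (j < i)%N; rewrite ?mulr1 ?mulr0 ?natrM // mulrC.
Qed.

End Ident.
Arguments bb {R k s} A i.
Arguments alpha {R k s} A.
Arguments e2 {R k s} A.
Arguments alphaE {R k s} A.
Arguments I1 {R k s}.
Arguments e2E {R k s} A.
Arguments sum_pairs {R k s}.
Arguments sum_tag {R k s} G.
Arguments bbE {R k s} A i.
Section Ident2.
Variables (R : realType) (k : nat) (s : 'I_k -> nat).
Local Notation T := {i : 'I_k & 'I_(s i)}.

Lemma signS2 m : (-1) ^+ m.+2 = (-1) ^+ m :> R.
Proof. by rewrite exprS mulN1r exprS mulN1r opprK. Qed.

Lemma pairW (x y : T) : x != y ->
  \sum_(A : {set T} | (x \in A) && (y \in A)) (-1) ^+ #|A| / ((#|A|%:R : R) ^+ 2) =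
  (harmonicH R #|{: T}| - 1) / (#|{: T}|%:R * (#|{: T}|%:R - 1)).
Proof.
move=> xy.
have T2 : (2 <= #|{: T}|)%N.
  by have := cards2 x y; rewrite xy => <-; apply: max_card.
rewrite (@sum_card_pair R T x y (fun m => (-1) ^+ m / ((m%:R : R) ^+ 2))) //.
set N := (#|{: T}| - 2)%N.
have -> : #|{: T}| = N.+2 by rewrite /N -addn2 subnK.
rewrite -Tsum.
apply: eq_bigr => m _; by rewrite signS2 -addn2 natrD.
Qed.

Lemma I2 :
  \sum_(A : {set T}) (-1) ^+ #|A| * (e2 A / alpha A ^+ 2) =
  (harmonicH R (\sum_(i < k) s i)%N - 1) *
    (\sum_(i < k) \sum_(j < k | (i < j)%N) (s i * s j)%:R)
     / ((\sum_(i < k) s i)%N%:R * ((\sum_(i < k) s i)%N%:R - 1)).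
Proof.
rewrite -card_T.
set Tc := (harmonicH R #|{: T}| - 1) / (#|{: T}|%:R * (#|{: T}|%:R - 1)).
set d := fun x y : T => ((tag x != tag y)%:R : R).
have aux : forall (A : {set T}) (K : R),
    \sum_(x : T) \sum_(y : T) (((x \in A) && (y \in A))%:R * (d x y * K)) =
    (\sum_(x in A) \sum_(y in A) d x y) * K.
  move=> A K; rewrite mulr_suml [RHS]big_mkcond; apply: eq_bigr => x _.
  case: (x \in A) => /=.
    rewrite mulr_suml [RHS]big_mkcond; apply: eq_bigr => y _.
    by case: (y \in A); rewrite /= ?mul1r ?mul0r.
  by rewrite big1 // => y _; rewrite mul0r.
transitivity ((\sum_(A : {set T}) \sum_(x : T) \sum_(y : T)
    (((x \in A) && (y \in A))%:R * (d x y * ((-1) ^+ #|A| / (#|A|%:R) ^+ 2)))) / 2).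
  rewrite mulr_suml; apply: eq_bigr => A _.
  rewrite aux e2E alphaE -/d; ring.
have ex : forall F : {set T} -> T -> T -> R,
    \sum_(A : {set T}) \sum_(x : T) \sum_(y : T) F A x y =
    \sum_(x : T) \sum_(y : T) \sum_(A : {set T}) F A x y.
  by move=> F; rewrite exchange_big; apply: eq_bigr => x _; rewrite exchange_big.
rewrite ex.
transitivity ((\sum_(x : T) \sum_(y : T) d x y * Tc) / 2).
  congr (_ / _); apply: eq_bigr => x _; apply: eq_bigr => y _.
  set g := fun A : {set T} => (-1) ^+ #|A| / ((#|A|%:R : R) ^+ 2).
  rewrite (eq_bigr (fun A : {set T} => d x y * (((x \in A) && (y \in A))%:R * g A))); last first.
    by move=> A _; rewrite /g; ring.
  rewrite -mulr_sumr.
  case: (tag x =P tag y) => e.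
    by rewrite /d e eqxx !mul0r.
  have xy : x != y by apply/eqP => exy; apply: e; rewrite exy.
  congr (_ * _); rewrite /Tc -(pairW _ _ xy) [RHS]big_mkcond; apply: eq_bigr => A _.
  by case: ((x \in A) && (y \in A)); rewrite ?mul1r ?mul0r.
under eq_bigr do rewrite -mulr_suml.
rewrite -mulr_suml /d sum_pairs.
set P := \sum_(i < k) _.
transitivity (P * Tc * (2 / 2)); first by ring.
by rewrite divff ?mulr1 // /Tc; ring.
Qed.

End Ident2.
Arguments I2 {R k s}.
Section Final.
Variables (R : realType) (k : nat) (s : 'I_k -> nat).
Local Notation T := {i : 'I_k & 'I_(s i)}.
Local Notation S := (\sum_(i < k) s i)%N.

Lemma cnt0 i : cnt (finset.set0 : {set T}) i = 0%N.
Proof. by rewrite /cnt; apply: eq_card0 => x; rewrite !inE. Qed.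

Lemma qA0 n : qA (R := R) n (finset.set0 : {set T}) = 1.
Proof. by rewrite /qA big1 // => i _; rewrite cnt0 mul0r subr0. Qed.

Lemma alpha0 : alpha (R := R) (finset.set0 : {set T}) = 0.
Proof. by rewrite alphaE cards0. Qed.

Lemma qA_bounds n (A : {set T}) : (S < n)%N ->
  0 <= qA (R := R) n A /\ (A != finset.set0 -> qA (R := R) n A < 1).
Proof.
move=> Sn.
have n0 : (0 < n)%N by apply: leq_ltn_trans Sn.
have n0R : (0 : R) < n%:R by rewrite ltr0n.
have fb : forall i, 0 <= 1 - (cnt A i)%:R / (n%:R : R) <= 1.
  move=> i.
  have cn : (cnt A i <= n)%N.
    apply: leq_trans (ltnW Sn); rewrite -card_T; apply: leq_trans (max_card A).
    by rewrite -(sum_cnt A) (bigD1 i) //= leq_addr.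
  have h1 : 0 <= (cnt A i)%:R / n%:R :> R by rewrite divr_ge0 // ler0n.
  have h2 : (cnt A i)%:R / n%:R <= 1 :> R by rewrite ler_pdivrMr // mul1r ler_nat.
  by apply/andP; split; lra.
split.
  by apply: prodr_ge0 => i _; case/andP: (fb i).
case/finset.set0Pn => x xA.
set i := tag x.
have c0 : (0 < cnt A i)%N by apply/card_gt0P; exists x; rewrite !inE xA eqxx.
have fi : 1 - (cnt A i)%:R / n%:R < 1 :> R.
  have : 0 < (cnt A i)%:R / n%:R :> R by rewrite divr_gt0 // ltr0n.
  lra.
rewrite /qA (bigD1 i) //=.
have Pl : \prod_(j < k | j != i) (1 - (cnt A j)%:R / n%:R) <= 1 :> R.
  by apply: prodr_ile1 => j _; apply: fb.
have P0 : 0 <= \prod_(j < k | j != i) (1 - (cnt A j)%:R / n%:R) :> R.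
  by apply: prodr_ge0 => j _; case/andP: (fb j).
have := fb i; case/andP => f0 f1.
nra.
Qed.

Lemma expE n : (S < n)%N ->
  expected_max R n s = - \sum_(A : {set T}) (-1) ^+ #|A| / (1 - qA n A).
Proof.
move=> Sn.
have sub1 : forall X : R, 1 - (1 + X) = - X by move=> X; ring.
have part : (fun N => \sum_(0 <= t < N) (1 - prob_max_le R n s t)) =
    (fun N => - \sum_(A : {set T} | A != finset.set0)
                 (-1) ^+ #|A| * \sum_(0 <= t < N) qA (R := R) n A ^+ t).
  apply/funext => N.
  under eq_bigr do rewrite (probE n _ Sn) (bigD1 finset.set0) //= cards0 qA0 expr1n expr0 mulr1 sub1.
  rewrite sumrN exchange_big /=; congr (- _); apply: eq_bigr => A _.
  by rewrite mulr_sumr.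
rewrite /expected_max part.
have -> : \sum_(A : {set T}) (-1) ^+ #|A| / (1 - qA n A) =
    \sum_(A : {set T} | A != finset.set0) (-1) ^+ #|A| * (1 - qA (R := R) n A)^-1.
  by rewrite (bigD1 finset.set0) //= qA0 subrr invr0 mulr0 add0r.
apply: cvg_lim => //.
apply: cvgN.
apply: cvg_sum_fin => A A0.
apply: cvgM; first exact: cvg_cst.
have [q0 q1] := qA_bounds n A Sn.
have qlt : `|qA (R := R) n A| < 1 by rewrite ger0_norm // q1.
have h := @cvg_geometric_series R 1 _ qlt.
rewrite mul1r in h.
apply: (@cvg_near R _ _ _ _ h).
near=> N; rewrite /series /geometric /=; apply: eq_bigr => t _; by rewrite mul1r.
Unshelve. all: by end_near.
Qed.

End Final.
Arguments qA_bounds {R k s} n A.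
Arguments expE {R k s} n.
Arguments qA0 {R k s} n.
Arguments alpha0 {R k s}.
Lemma r_cvg (R : realType) (k : nat) (s : 'I_k -> nat) (A : {set {i : 'I_k & 'I_(s i)}}) :
  (fun n : nat => (1 - qA (R := R) n A)^-1 - n%:R / alpha A - e2 A / alpha A ^+ 2)
    @ \oo --> (0 : R).
Proof.
case: (A =P finset.set0) => [->|A0].
  under eq_cvg do rewrite qA0 alpha0 subrr expr2 mulr0 !invr0 !mulr0 !subr0.
  exact: cvg_cst.
have a0 : alpha (R := R) A != 0.
  by rewrite alphaE pnatr_eq0 cards_eq0; apply/eqP.
rewrite /qA /e2.
exact: (@term_cvg R _ (index_enum 'I_k) (bb A) a0).
Qed.

Theorem mainTheorem2 (R : realType) (k : nat) (s : 'I_k -> nat) :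
  (0 < k)%N ->
  let S := (\sum_(i < k) s i)%N in
  (fun n : nat =>
     expected_max R n s
     - (n%:R * harmonicH R S
        - (harmonicH R S - 1) * (\sum_(i < k) \sum_(j < k | (i < j)%N) (s i * s j)%:R)
          / (S%:R * (S%:R - 1))))
    @ \oo --> (0 : R).
Proof.
move=> k0 S; rewrite {}/S.
pose r := fun (A : {set {i : 'I_k & 'I_(s i)}}) (n : nat) =>
  (1 - qA (R := R) n A)^-1 - n%:R / alpha A - e2 A / alpha A ^+ 2.
apply: (@cvg_evt R _ (fun n => - \sum_(A : {set {i : 'I_k & 'I_(s i)}}) (-1) ^+ #|A| * r A n)
          0 (\sum_(i < k) s i)%N).
  move=> n Sn.
  rewrite (expE n Sn) -I2 I1 mulrN mulr_sumr.
  transitivity (- \sum_(A : {set {i : 'I_k & 'I_(s i)}})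
     ((-1) ^+ #|A| / (1 - qA (R := R) n A) - n%:R * ((-1) ^+ #|A| / alpha A)
       - (-1) ^+ #|A| * (e2 A / alpha A ^+ 2))).
    rewrite !sumrB; ring.
  congr (- _); apply: eq_bigr => A _; rewrite /r; ring.
have H : forall A : {set {i : 'I_k & 'I_(s i)}},
    (fun n => (-1) ^+ #|A| * r A n) @ \oo --> ((-1) ^+ #|A| * 0 : R).
  move=> A; apply: cvgM; first exact: cvg_cst.
  exact: r_cvg.
have := cvgN (@cvg_sum_fin R _ (index_enum _) xpredT _ _ (fun A _ => H A)).
have lim0 : \sum_(A : {set {i : 'I_k & 'I_(s i)}}) ((-1) ^+ #|A| * 0 : R) = 0.
  by rewrite big1 // => A _; rewrite mulr0.
by rewrite lim0 oppr0; apply.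
Qed.
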